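(* Let $A\in\mathbb{R}^{n\times n}$, $B\in\mathbb{R}^{n\times m}$, $C\in\mathbb{R}^{q\times n}$, and let $\tilde C\in\mathbb{R}^{q_m\times n}$ consist of a subset of the rows of $C$. Suppose the sequences $g_k\in\mathbb{R}^{q\times m}$, $\tilde g_k\in\mathbb{R}^{q_m\times m}$ satisfy $g_k=CA^{k-1}B$ and $\tilde g_k=\tilde CA^{k-1}B$ for all $k\ge 1$. If $(A,\tilde C)$ is an observable pair, then there exists a positive integer $p$ such that for all positive integers $r,p_f$, $$\mathrm{Null}\big(T_1^{p,r}(\{\tilde g_k\})\big)\subseteq \mathrm{Null}\big(T_{p+1}^{p_f,r}(\{g_k\})\big).$$
   Context: $(A,\tilde C)$ is an observable pair if the matrix obtained by stacking $\tilde C,\tilde CA,\dots,\tilde CA^{n-1}$ vertically has full column rank. For a sequence of matrices $\{h_k\}$ and positive integers $j,a,b$, $T_j^{a,b}(\{h_k\})$ denotes the $a\times b$ block matrix whose $(\mu,\nu)$ block ($1\le\mu\le a$, $1\le\nu\le b$) is $h_{j+a-\mu+\nu-1}$; so its first block row is $(h_{j+a-1},\dots,h_{j+a+b-2})$ and its last block row is $(h_j,\dots,h_{j+b-1})$. *)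

(* Defs.v *)
From mathcomp Require Import all_boot all_order all_algebra.
From mathcomp Require Import reals.
Set Implicit Arguments. Unset Strict Implicit. Unset Printing Implicit Defensive.
Import Order.TTheory GRing.Theory Num.Theory.
Local Open Scope ring_scope.

(* Block Toeplitz matrix T_j^{a,b}({h_k}): a x b block matrix whose
   (mu,nu) block (1-based) is h_{j+a-mu+nu-1}.  With 0-based block indices
   mu0 = mu-1, nu0 = nu-1 this is h_{j + (a - (mu0+1)) + nu0}. *)
Definition block_toeplitz (R : Type) (q m : nat) (h : nat -> 'M[R]_(q, m))
  (j a b : nat) : 'M[R]_(\sum_(mu < a) q, \sum_(nu < b) m) :=
  \mxblock_(mu < a, nu < b) h (j + (a - mu.+1) + nu)%N.

Definition obsv_mx (R : pzRingType) (n qm : nat) (A : 'M[R]_n) (Ct : 'M[R]_(qm, n))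
  : 'M[R]_(\sum_(i < n) qm, n) :=
  \mxcol_(i < n) (Ct *m A ^+ i).

Definition observable (F : fieldType) (n qm : nat) (A : 'M[F]_n) (Ct : 'M[F]_(qm, n)) :=
  \rank (obsv_mx A Ct) = n.

Definition nullsp (F : pzRingType) (r c : nat) (M : 'M[F]_(r, c)) : pred 'cV[F]_c :=
  fun x => M *m x == 0.

(* Main.v *)
Require Import Defs.
From mathcomp Require Import all_boot all_order all_algebra.
From mathcomp Require Import reals.
Import Order.TTheory GRing.Theory Num.Theory.
Local Open Scope ring_scope.

Lemma mxcol_eq0 {R : pzRingType} {p : nat} {p_ : 'I_p -> nat} {k : nat}
  {C_ : forall i, 'M[R]_(p_ i, k)} :
  \mxcol_i C_ i = 0 -> forall i, C_ i = 0.
Proof. by move=> H i; rewrite -(mxcolK C_ i) H submxcol0. Qed.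

Theorem theorem3 (R : realType) (n m q qm : nat)
  (A : 'M[R]_n) (B : 'M[R]_(n, m)) (C : 'M[R]_(q, n)) (Ct : 'M[R]_(qm, n))
  (g : nat -> 'M[R]_(q, m)) (gt : nat -> 'M[R]_(qm, m)) :
  (exists f : 'I_qm -> 'I_q, injective f /\ Ct = rowsub f C) ->
  (forall k : nat, (1 <= k)%N -> g k = C *m A ^+ k.-1 *m B) ->
  (forall k : nat, (1 <= k)%N -> gt k = Ct *m A ^+ k.-1 *m B) ->
  observable A Ct ->
  exists p : nat, (0 < p)%N /\
    forall r pf : nat, (0 < r)%N -> (0 < pf)%N ->
      {subset nullsp (block_toeplitz gt 1 p r)
         <= nullsp (block_toeplitz g p.+1 pf r)}.
Proof.
move=> _ Hg Hgt Hobs; exists n.+1; split => // r pf _ _ x.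
set W := \mxrow_(nu < r) (A ^+ nu *m B).
have E1 : block_toeplitz gt 1 n.+1 r =
   \mxcol_(mu < n.+1) (Ct *m A ^+ (n.+1 - mu.+1) *m W).
  rewrite /block_toeplitz mxblockEv; apply: eq_mxcol => mu.
  rewrite /W mul_mxrow; apply: eq_mxrow => nu.
  rewrite Hgt; last by rewrite add1n.
  by rewrite add1n /= exprD -mulmxE !mulmxA.
have E2 : block_toeplitz g n.+2 pf r =
   \mxcol_(mu < pf) (C *m A ^+ (n.+1 + (pf - mu.+1)) *m W).
  rewrite /block_toeplitz mxblockEv; apply: eq_mxcol => mu.
  rewrite /W mul_mxrow; apply: eq_mxrow => nu.
  by rewrite Hg //= exprD -mulmxE !mulmxA.
rewrite /nullsp /in_mem /= E1 E2 mxcol_mul => /eqP H.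
have H1 := mxcol_eq0 H.
have Hv : W *m x = 0.
  have Hrf : row_free (obsv_mx A Ct)^T.
    by rewrite /row_free mxrank_tr Hobs.
  apply: trmx_inj; rewrite trmx0; apply: (row_free_inj Hrf).
  rewrite mul0mx -trmx_mul /obsv_mx mxcol_mul.
  rewrite (eq_mxcol _ (B_ := fun i => 0)) ?mxcol0 ?trmx0 // => i.
  have Hi : (n - i < n.+1)%N by rewrite ltnS leq_subr.
  have := H1 (inord (n - i)); rewrite inordK // subSS subKn; last exact: ltnW.
  by rewrite !mulmxA.
rewrite mxcol_mul; apply/eqP.
rewrite (eq_mxcol _ (B_ := fun i => 0)) ?mxcol0 // => i.
by rewrite -mulmxA -mulmxA -mulmxA Hv !mulmx0.
Qed.
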